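(* Let $(\Omega,\mathcal{F},\mathbb{P})$ be a complete probability space, $c$ a random cost vector in a compact convex $\mathcal{C}\subseteq\mathbb{R}^d$ with $\mathbb{E}[\|c\|^2]<\infty$ and absolutely continuous law, $\mathcal{Z}\subseteq\mathbb{R}^d$ non-empty compact (full-row-rank constraint matrix if polyhedral), and $\pi^*:\mathcal{C}\to\mathcal{Z}$ measurable, $L$-Lipschitz, with $\mathbb{E}[\|\pi^*(c)\|^2]<\infty$ and $\pi^*(c)\in\arg\min_{z\in\mathcal{Z}}c^\top z$ a.s. Let $\hat{\mathbb{E}}[c]$ be an estimator of $\mathbb{E}[c]$ based on an i.i.d. sample of size $n$ satisfying $\hat{\mathbb{E}}[c]\to\mathbb{E}[c]$ in probability, $\|\hat{\mathbb{E}}[c]-\mathbb{E}[c]\|=\mathcal{O}_P(n^{-1/2})$, and $\sqrt n(\hat{\mathbb{E}}[c]-\mathbb{E}[c])\to\mathcal{N}(0,\Sigma_c)$ in distribution. Then $$\mathrm{Regret}(c,\pi^*(\hat{\mathbb{E}}[c]))=\mathrm{Cov}(c,\pi^*(c))+R(c)+\mathcal{O}_P(n^{-1/2}).$$ If in addition $R(c)=0$, this becomes $\mathrm{Cov}(c,\pi^*(c))+\mathcal{O}_P(n^{-1/2})$.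
   Context: $\mathrm{Regret}(c,\pi^*(\hat{\mathbb{E}}[c]))=\mathbb{E}[c^\top\pi^*(c)]-\mathbb{E}[c^\top\pi^*(\hat{\mathbb{E}}[c])]$; $\mathrm{Cov}(c,\pi^*(c))=\mathbb{E}[c^\top\pi^*(c)]-\mathbb{E}[c]^\top\mathbb{E}[\pi^*(c)]$; $R(c)=\mathbb{E}[c]^\top(\mathbb{E}[\pi^*(c)]-\pi^*(\mathbb{E}[c]))$; $\Sigma_c$ is the covariance matrix of $c$. *)

(* Defs.v *)
From HB Require Import structures.
From mathcomp Require Import all_boot all_order all_algebra.
From mathcomp Require Import all_classical all_reals all_analysis.
Set Implicit Arguments. Unset Strict Implicit. Unset Printing Implicit Defensive.
Import Order.TTheory GRing.Theory Num.Theory.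
Import numFieldNormedType.Exports.
Local Open Scope classical_set_scope.
Local Open Scope ring_scope.

Section defs.
Context {R : realType} {d : nat}.
Local Notation vec := 'rV[R]_d.

Definition dotv (u v : vec) : R := \sum_(i < d) u 0 i * v 0 i.
Definition enorm (u : vec) : R := Num.sqrt (dotv u u).

Definition borel_vec : set (set vec) := <<s [set: vec], open >>.

Definition rvec_measurable {dT} {T : measurableType dT} (X : T -> vec) :=
  forall A, borel_vec A -> measurable (X @^-1` A).

Definition box (a b : vec) : set vec :=
  [set x | forall i : 'I_d, a 0 i <= x 0 i <= b 0 i].
Definition box_vol (a b : vec) : R := \prod_(i < d) Num.max 0 (b 0 i - a 0 i).
Definition lebesgue_null (A : set vec) :=
  forall eps : R, 0 < eps -> exists a b : nat -> vec,
    A `<=` \bigcup_k box (a k) (b k) /\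
    (\sum_(0 <= k <oo) (box_vol (a k) (b k))%:E <= eps%:E)%E.

Definition abs_cont_law {dT} {T : measurableType dT} (P : probability T R)
  (X : T -> vec) :=
  forall A, borel_vec A -> lebesgue_null A -> P (X @^-1` A) = 0%E.

Definition convex_set_vec (C : set vec) :=
  forall x y t, C x -> C y -> 0 <= t <= 1 -> C (t *: x + (1 - t) *: y).

Definition mean_vec {dT} {T : measurableType dT} (P : probability T R)
  (X : T -> vec) : vec := \row_i fine ('E_P[fun w => X w 0 i]).

Definition cov_mx {dT} {T : measurableType dT} (P : probability T R)
  (X : T -> vec) : 'M[R]_d :=
  \matrix_(i, j) fine ('E_P[fun w => (X w 0 i - mean_vec P X 0 i) *
                                     (X w 0 j - mean_vec P X 0 j)]).

Definition mutually_independent {dT} {T : measurableType dT}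
  (Q : probability T R) (X : nat -> T -> vec) :=
  forall (I : seq nat) (A : nat -> set vec), uniq I ->
    (forall k, borel_vec (A k)) ->
    Q (\bigcap_(k in [set k | k \in I]) (X k @^-1` A k)) =
    (\prod_(k <- I) Q (X k @^-1` A k))%E.

Definition same_law {dT} {T : measurableType dT} {dU} {U : measurableType dU}
  (Q : probability T R) (X : T -> vec) (P : probability U R) (Y : U -> vec) :=
  forall A, borel_vec A -> Q (X @^-1` A) = P (Y @^-1` A).

Definition cvg_in_prob {dT} {T : measurableType dT} (Q : probability T R)
  (Y : nat -> T -> vec) (m : vec) :=
  forall eps : R, 0 < eps ->
    (fun n => Q [set q | eps < enorm (Y n q - m)]) @ \oo --> 0%E.

Definition bounded_in_prob {dT} {T : measurableType dT} (Q : probability T R)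
  (Y : nat -> T -> R) (r : nat -> R) :=
  forall eps : R, 0 < eps -> exists M : R, 0 < M /\ exists N : nat,
    forall n, (N <= n)%N -> (Q [set q | (M * r n < `|Y n q|)%R] <= eps%:E)%E.

(* the centred Gaussian law N(0,S) on R^d, characterised by its
   characteristic function t |-> exp(- t^T S t / 2) *)
Definition is_gaussian0 {dT} {T : measurableType dT} (PZ : probability T R)
  (Z : T -> vec) (S : 'M[R]_d) :=
  rvec_measurable Z /\
  forall t : vec,
    ('E_PZ[fun w => cos (dotv t (Z w))] = (expR (- (dotv t (t *m S)) / 2))%:E)%E /\
    ('E_PZ[fun w => sin (dotv t (Z w))] = 0)%E.

Definition cvg_dist_gaussian0 {dT} {T : measurableType dT}
  (Q : probability T R) (Y : nat -> T -> vec) (S : 'M[R]_d) :=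
  exists (dZ : measure_display) (TZ : measurableType dZ)
         (PZ : probability TZ R) (Z : TZ -> vec),
    is_gaussian0 PZ Z S /\
    forall g : vec -> R, continuous g -> (exists B : R, forall x, `|g x| <= B) ->
      ((fun n => 'E_Q[fun q => g (Y n q)]) @ \oo --> 'E_PZ[fun w => g (Z w)])%E.

Definition std_polyhedron (m : nat) (A : 'M[R]_(m, d)) (b : 'cV[R]_m) : set vec :=
  [set z | A *m z^T = b /\ forall i, 0 <= z 0 i].

(* Regret of the decision pi(zhat), for a fixed plug-in estimate zhat,
   the expectation being over (a fresh draw of) the cost c:
   E[c^T pi(c)] - E[c^T pi(zhat)] *)
Definition regret {dT} {T : measurableType dT} (P : probability T R)
  (c : T -> vec) (pi : vec -> vec) (zhat : vec) : R :=
  fine ('E_P[fun w => dotv (c w) (pi (c w))]) -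
  fine ('E_P[fun w => dotv (c w) (pi zhat)]).

Definition cov_cpi {dT} {T : measurableType dT} (P : probability T R)
  (c : T -> vec) (pi : vec -> vec) : R :=
  fine ('E_P[fun w => dotv (c w) (pi (c w))]) -
  dotv (mean_vec P c) (mean_vec P (pi \o c)).

Definition Rterm {dT} {T : measurableType dT} (P : probability T R)
  (c : T -> vec) (pi : vec -> vec) : R :=
  dotv (mean_vec P c) (mean_vec P (pi \o c) - pi (mean_vec P c)).

Definition sample_estimator {T : Type} (est : forall n : nat, ('I_n -> vec) -> vec)
  (X : nat -> T -> vec) (n : nat) (q : T) : vec :=
  est n (fun i : 'I_n => X (nat_of_ord i) q).

End defs.

(* Main.v *)
Require Import Defs.
From HB Require Import structures.
From mathcomp Require Import all_boot all_order all_algebra.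
From mathcomp Require Import all_classical all_reals all_analysis.
From mathcomp Require Import measurable_realfun.
From mathcomp Require Import ring lra.
Import Order.TTheory GRing.Theory Num.Theory.
Import numFieldNormedType.Exports.
Local Open Scope classical_set_scope.
Local Open Scope ring_scope.

Section helpers.
Context {R : realType} {d : nat}.
Local Notation vec := 'rV[R]_d.

Lemma dotvB (u v w : vec) : dotv u (v - w) = dotv u v - dotv u w.
Proof. by rewrite /dotv -sumrB; apply: eq_bigr => i _; rewrite !mxE mulrBr. Qed.

Lemma coord_le_enorm (v : vec) i : `|v 0 i| <= enorm v.
Proof.
rewrite /enorm -sqrtr_sqr ler_sqrt; last by rewrite /dotv sumr_ge0 // => j _; rewrite -expr2 sqr_ge0.
rewrite /dotv (bigD1 i) //= expr2.
by rewrite lerDl sumr_ge0 // => j _; rewrite -expr2 sqr_ge0.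
Qed.

Lemma dot_bound (u v : vec) : `|dotv u v| <= (\sum_i `|u 0 i|) * enorm v.
Proof.
rewrite /dotv mulr_suml; apply: (le_trans (ler_norm_sum _ _ _)).
by apply: ler_sum => i _; rewrite normrM ler_wpM2l // coord_le_enorm.
Qed.

Lemma continuous_sum_fun (T : topologicalType) (F : 'I_d -> T -> R) :
  (forall i, continuous (F i)) -> continuous (fun x => \sum_i F i x).
Proof.
move=> Fc.
suff H : forall s : seq 'I_d, continuous (fun x => \sum_(i <- s) F i x) by exact: H.
elim=> [|i s IH].
  by under eq_fun do rewrite big_nil; exact: cst_continuous.
under eq_fun do rewrite big_cons.
by move=> x; exact: (@continuousD _ R^o _ (F i) (fun x => \sum_(j <- s) F j x) x (Fc i x) (IH x)).
Qed.

Lemma coordB_continuous (m : vec) i : continuous (fun v : vec => (v - m) 0 i).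
Proof.
have -> : (fun v : vec => (v - m) 0 i) = (fun v => v 0 i - m 0 i).
  by apply/funext => v; rewrite !mxE.
move=> x; have := (@continuousB _ R^o _ (fun v : vec => v 0 i) (fun=> m 0 i) x
  (@coord_continuous R 1 d 0 i x) (@cst_continuous _ R^o (m 0 i) x)).
exact.
Qed.

Lemma enormB_continuous (m : vec) : continuous (fun v : vec => enorm (v - m)).
Proof.
have Hd : continuous (fun v : vec => dotv (v - m) (v - m)).
  apply: continuous_sum_fun => i y.
  exact: (@continuousM R _ (fun v : vec => (v - m) 0 i) (fun v : vec => (v - m) 0 i) y
    (coordB_continuous m i y) (coordB_continuous m i y)).
move=> x; exact: (continuous_comp (Hd x) (@sqrt_continuous R _)).
Qed.

Lemma open_borel (A : set vec) : open A -> borel_vec A.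
Proof. by move=> oA; apply: sub_sigma_algebra. Qed.

Lemma meas_open_pre {dT} {T : measurableType dT} (Y : T -> vec) (h : vec -> R) a :
  rvec_measurable Y -> continuous h -> measurable [set q | a < h (Y q)].
Proof.
move=> mY hc.
have -> : [set q | a < h (Y q)] = Y @^-1` (h @^-1` [set x | a < x]) by [].
apply: mY; apply: open_borel; apply: open_comp; last exact: open_gt.
by move=> x _; exact: hc.
Qed.

Lemma coord_meas {dT} {T : measurableType dT} (Y : T -> vec) i :
  rvec_measurable Y -> measurable_fun setT (fun q => Y q 0 i).
Proof.
move=> mY; apply: (@measurability _ _ _ _ setT _ (@RGenOInfty.G R)).
  exact: RGenOInfty.measurableE.
move=> _ [_ [x ->] <-]; rewrite setTI.
have -> : (fun q => Y q 0 i) @^-1` `]x, +oo[%classic = [set q | x < Y q 0 i].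
  by apply/funext => q /=; rewrite in_itv /= andbT.
exact: (@meas_open_pre _ _ Y (fun v : vec => v 0 i) x mY (@coord_continuous R 1 d 0 i)).
Qed.

Lemma coord_Lfun {dT} {T : measurableType dT} (P : probability T R) (Y : T -> vec)
  (C : set vec) i : rvec_measurable Y -> compact C -> (forall q, C (Y q)) ->
  (fun q => Y q 0 i) \in Lfun P 1.
Proof.
move=> mY cC YC; apply/Lfun1_integrable.
apply: measurable_bounded_integrable => //.
- apply: (le_lt_trans (probability_le1 P measurableT)).
  exact: ltry.
- exact: coord_meas.
have cf : {within C, continuous (fun v : vec => v 0 i)}.
  by apply: continuous_subspaceT => x; exact: coord_continuous.
have := @compact_bounded R R^o _ (@continuous_compact _ R^o (fun v : vec => v 0 i) C cf cC).
rewrite /bounded_near => H; move: H => /= H; apply: (filterS _ H) => M HM w _; apply: HM; exists (Y w) => //.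
Qed.

Lemma expectation_dot {dT} {T : measurableType dT} (P : probability T R) (Y : T -> vec)
  (C : set vec) (z : vec) : rvec_measurable Y -> compact C -> (forall q, C (Y q)) ->
  ('E_P[fun w => dotv (Y w) z] = (dotv (mean_vec P Y) z)%:E)%E.
Proof.
move=> mY cC YC.
have Li i := @coord_Lfun _ _ P Y C i mY cC YC.
suff H : forall s : seq 'I_d,
  expectation P (fun w => \sum_(i <- s) Y w 0 i * z 0 i) =
     (\sum_(i <- s) fine (expectation P (fun w => Y w 0 i)) * z 0 i)%:E /\
  (fun w => \sum_(i <- s) Y w 0 i * z 0 i) \in Lfun P 1.
  rewrite /dotv (H (index_enum _)).1; congr EFin.
  by apply: eq_bigr => i _; rewrite mxE.
elim=> [|i s [IH IL]].
  have -> : (fun w => \sum_(i <- [::]) Y w 0 i * z 0 i) = cst 0.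
    by apply/funext => w; rewrite big_nil.
  by rewrite big_nil expectation_cst; split => //; exact: Lfun_cst.
have -> : (fun w => \sum_(j <- i :: s) Y w 0 j * z 0 j) =
   (z 0 i \o* (fun w => Y w 0 i)) \+ (fun w => \sum_(j <- s) Y w 0 j * z 0 j).
  by apply/funext => w; rewrite big_cons /= mulrC.
have LZ : (z 0 i \o* (fun w => Y w 0 i)) \in Lfun P 1.
  by apply: Lfun_scale => //; exact: Li.
split; last exact: rpredD.
rewrite expectationD // expectationZl // IH.
by rewrite -(fineK (expectation_fin_num (Li i))) -EFinM -EFinD big_cons mulrC.
Qed.


Lemma enorm_ge0 (v : vec) : 0 <= enorm v.
Proof. exact: sqrtr_ge0. Qed.

Lemma enormN (v : vec) : enorm (- v) = enorm v.
Proof. by rewrite /enorm /dotv; congr Num.sqrt; apply: eq_bigr => i _; rewrite !mxE mulrNN. Qed.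

Lemma dot_cont (u w : vec) : continuous (fun v : vec => `|dotv u (w - v)|).
Proof.
have Hd : continuous (fun v : vec => dotv u (w - v)).
  apply: continuous_sum_fun => i y.
  have -> : (fun v : vec => u 0 i * (w - v) 0 i) = (fun v => u 0 i * (w 0 i - v 0 i)).
    by apply/funext => v; rewrite !mxE.
  have := @continuousB _ R^o _ (fun=> w 0 i) (fun v : vec => v 0 i) y
    (@cst_continuous _ R^o (w 0 i) y) (@coord_continuous R 1 d 0 i y).
  move=> hB.
  exact: (@continuousM R _ (fun=> u 0 i) (fun v : vec => w 0 i - v 0 i) y
    (@cst_continuous _ R^o (u 0 i) y) hB).
move=> x; exact: (continuous_comp (Hd x) (@norm_continuous R R^o _)).
Qed.

End helpers.

Lemma enorm_ball {R : realType} {d : nat} (m v : 'rV[R]_d) e : 0 < e -> enorm (v - m) < e -> ball m e v.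
Proof.
move=> e0 h; split => // i j; rewrite (ord1 i) /ball /=.
rewrite distrC; apply: le_lt_trans h.
by have := coord_le_enorm (v - m) j; rewrite !mxE.
Qed.

Lemma mean_in_C {R : realType} {d : nat} {dQ} {Qs : measurableType dQ} (Q : probability Qs R)
  (C : set 'rV[R]_d) (Y : nat -> Qs -> 'rV[R]_d) (m : 'rV[R]_d) :
  compact C -> (forall n q, C (Y n q)) -> cvg_in_prob Q Y m -> C m.
Proof.
move=> cC YC Ycv.
have Cl : closed C := compact_closed (@norm_hausdorff _ _) cC.
apply: contrapT => nCm.
have : nbhs m (~` C) by apply: open_nbhs_nbhs; split => //; exact: closed_openC.
move=> /nbhs_ballP [e e0 He].
have e20 : 0 < e / 2 by rewrite divr_gt0.
have H1 : forall n, Q [set q | e / 2 < enorm (Y n q - m)] = 1%E.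
  move=> n.
  have -> : [set q | e / 2 < enorm (Y n q - m)] = setT.
    apply/seteqP; split => // q _ /=; rewrite ltNge; apply/negP => hle.
    apply: (He (Y n q)) (YC n q).
    apply: enorm_ball => //; apply: (le_lt_trans hle).
    by rewrite ltr_pdivrMr // ltr_pMr // ltr1n.
  exact: probability_setT.
have := Ycv _ e20.
rewrite (_ : (fun n => Q [set q | e / 2 < enorm (Y n q - m)]) = cst 1%E); last by apply/funext => n; rewrite H1.
move=> Hcv.
have := @cvg_unique _ (@ereal_hausdorff R) _ _ _ _ (cvg_cst 1%E) Hcv.
move=> h; have := h ltac:(typeclasses eauto) ltac:(typeclasses eauto); apply/eqP; exact: oner_neq0.
Qed.

Theorem theorem3p10 (R : realType) (d : nat)
  (* complete probability space (Omega, F, P) carrying the cost c *)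
  (dO : measure_display) (Omega : measurableType dO) (P : probability Omega R)
  (P_complete : measure_is_complete P)
  (* cost vector c with values in a compact convex C *)
  (C : set 'rV[R]_d) (C_compact : compact C) (C_convex : convex_set_vec C)
  (c : Omega -> 'rV[R]_d) (c_meas : rvec_measurable c) (c_in_C : forall w, C (c w))
  (c_L2 : P.-integrable setT (fun w => ((enorm (c w)) ^+ 2)%:E))
  (c_ac : abs_cont_law P c)
  (* feasible set Z *)
  (Z : set 'rV[R]_d) (Z_nonempty : Z !=set0) (Z_compact : compact Z)
  (Z_poly : (exists m (A : 'M[R]_(m, d)) b, Z = std_polyhedron A b) ->
            exists m (A : 'M[R]_(m, d)) b, row_free A /\ Z = std_polyhedron A b)
  (* the optimal policy pi* : C -> Z *)
  (pi : 'rV[R]_d -> 'rV[R]_d) (L : R)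
  (pi_into : forall x, C x -> Z (pi x))
  (pi_meas : forall A, borel_vec A -> borel_vec (C `&` pi @^-1` A))
  (pi_lip : forall x y, C x -> C y -> enorm (pi x - pi y) <= L * enorm (x - y))
  (pi_L2 : P.-integrable setT (fun w => ((enorm (pi (c w))) ^+ 2)%:E))
  (pi_opt : {ae P, forall w, forall z, Z z -> dotv (c w) (pi (c w)) <= dotv (c w) z})
  (* i.i.d. sample X_1, X_2, ... distributed as c, on a sample space Q *)
  (dQ : measure_display) (Qs : measurableType dQ) (Q : probability Qs R)
  (X : nat -> Qs -> 'rV[R]_d)
  (X_meas : forall k, rvec_measurable (X k))
  (X_law : forall k, same_law Q (X k) P c)
  (X_indep : mutually_independent Q X)
  (* the estimator of E[c] built from the sample of size n *)
  (est : forall n : nat, ('I_n -> 'rV[R]_d) -> 'rV[R]_d)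
  (Ehat_in_C : forall n q, C (sample_estimator est X n q))
  (Ehat_meas : forall n, rvec_measurable ((sample_estimator est X) n))
  (Ehat_cons : cvg_in_prob Q (sample_estimator est X) (mean_vec P c))
  (Ehat_rate : bounded_in_prob Q (fun n q => enorm ((sample_estimator est X) n q - mean_vec P c))
                       (fun n => (Num.sqrt (n%:R))^-1))
  (Ehat_clt : cvg_dist_gaussian0 Q
                (fun n q => Num.sqrt (n%:R) *: ((sample_estimator est X) n q - mean_vec P c))
                (cov_mx P c)) :
  bounded_in_prob Q (fun n q => regret P c pi ((sample_estimator est X) n q) - cov_cpi P c pi - Rterm P c pi)
          (fun n => (Num.sqrt (n%:R))^-1) /\
  (Rterm P c pi = 0 ->
   bounded_in_prob Q (fun n q => regret P c pi ((sample_estimator est X) n q) - cov_cpi P c pi)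
           (fun n => (Num.sqrt (n%:R))^-1)).
Proof.
set zh := sample_estimator est X.
set m := mean_vec P c.
set r := (fun n : nat => (Num.sqrt (n%:R))^-1 : R).
have Cm : C m := mean_in_C Q C zh m C_compact Ehat_in_C Ehat_cons.
have key : forall z, regret P c pi z - cov_cpi P c pi - Rterm P c pi = dotv m (pi m - pi z).
  move=> z; rewrite /regret /cov_cpi /Rterm (expectation_dot P c C (pi z) c_meas C_compact c_in_C) /=.
  rewrite -/m !dotvB; lra.
set K := \sum_i `|m 0 i|.
set A := K * `|L| + 1.
have K0 : 0 <= K by apply: sumr_ge0 => i _.
have A0 : 0 < A by rewrite /A ltr_wpDl // mulr_ge0.
have bnd : forall z, C z -> `|dotv m (pi m - pi z)| <= A * enorm (z - m).
  move=> z Cz; apply: (le_trans (dot_bound _ _)).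
  have e1 : enorm (pi m - pi z) = enorm (pi z - pi m) by rewrite -enormN opprB.
  rewrite e1; apply: (le_trans (ler_wpM2l K0 (pi_lip z m Cz Cm))).
  rewrite mulrA /A mulrDl mul1r -[X in X <= _]addr0 lerD //; last exact: enorm_ge0.
  by rewrite ler_wpM2r ?enorm_ge0 // ler_wpM2l // ler_norm.
have main : bounded_in_prob Q
    (fun n q => regret P c pi (zh n q) - cov_cpi P c pi - Rterm P c pi) r.
  move=> eps eps0.
  have [M [M0 [N hN]]] := Ehat_rate eps eps0.
  exists (A * M); split; first exact: mulr_gt0.
  exists N => n nN; apply: le_trans (hN n nN).
  apply: le_measure; rewrite ?inE.
  - have -> : [set q | A * M * r n < `|regret P c pi (zh n q) - cov_cpi P c pi - Rterm P c pi|]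
        = zh n @^-1` (C `&` pi @^-1` [set v | A * M * r n < `|dotv m (pi m - v)|]).
      apply/seteqP; split => q /=; rewrite key.
        by move=> h; split; [exact: Ehat_in_C | exact: h].
      by case=> _ h.
    apply: Ehat_meas; apply: pi_meas; apply: open_borel.
    apply: (@open_comp _ _ (fun v : 'rV[R]_d => `|dotv m (pi m - v)|) [set x | A * M * r n < x]); last exact: open_gt.
    by move=> x _; exact: dot_cont.
  - apply: (@meas_open_pre _ _ _ _ (zh n) (fun v => `|enorm (v - m)|) (M * r n) (Ehat_meas n)).
    move=> x; exact: (continuous_comp (enormB_continuous m x) (@norm_continuous R R^o _)).
  - move=> q /=; rewrite key => h; rewrite ger0_norm ?enorm_ge0 //.
    rewrite -(ltr_pM2l A0) mulrA; apply: (lt_le_trans h).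
    exact: bnd.
split => // HR.
have -> : (fun n q => regret P c pi (zh n q) - cov_cpi P c pi) =
          (fun n q => regret P c pi (zh n q) - cov_cpi P c pi - Rterm P c pi).
  by rewrite HR; apply/funext => n; apply/funext => q; rewrite subr0.
exact: main.
Qed.
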